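(* Let $A_1,\ldots,A_k$ and $B_1,\ldots,B_k$ be $n\times n$ Hermitian matrices with $mI\le A_i,B_i\le MI$ for $i=1,\ldots,k$ and some scalars $0<m<M$, and let $w_1,\ldots,w_k$ be positive scalars with $\sum_{i=1}^kw_i=1$. Then $$\left(\sum_{i=1}^kw_iA_i^2\right)^{1/2}+\left(\sum_{i=1}^kw_iB_i^2\right)^{1/2}\le\frac{M+m}{2\sqrt{Mm}}\left(\sum_{i=1}^kw_i(A_i+B_i)^2\right)^{1/2}$$ and $$\left(\sum_{i=1}^kw_iA_i^2\right)^{1/2}+\left(\sum_{i=1}^kw_iB_i^2\right)^{1/2}\le\frac{(M-m)^2}{2(M+m)}I+\left(\sum_{i=1}^kw_i(A_i+B_i)^2\right)^{1/2}.$$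
   Context: $\le$ is the Löwner order on Hermitian matrices. *)

(* Defs.v *)
From HB Require Import structures.
From mathcomp Require Import all_boot all_order all_algebra.
Set Implicit Arguments. Unset Strict Implicit. Unset Printing Implicit Defensive.
Import Order.TTheory GRing.Theory Num.Theory.
Local Open Scope ring_scope.
Local Open Scope sesquilinear_scope.

Definition psdmx (C : numClosedFieldType) (n : nat) (A : 'M[C]_n) : Prop :=
  A \is hermsymmx /\ forall u : 'rV[C]_n, 0 <= (u *m A *m u ^t*) 0 0.

Definition loewner_le (C : numClosedFieldType) (n : nat) (A B : 'M[C]_n) : Prop :=
  psdmx (B - A).

(* Principal matrix square root via the spectral decomposition
   A = P^-1 diag(d) P (P unitary); for A PSD this is the unique PSD root. *)
Definition sqrtmx (C : numClosedFieldType) (n : nat) (A : 'M[C]_n) : 'M[C]_n :=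
  invmx (spectralmx A) *m diag_mx (map_mx sqrtC (spectral_diag A)) *m spectralmx A.

(* Main.v *)
Require Import Defs.
From HB Require Import structures.
From mathcomp Require Import all_boot all_order all_algebra.
From mathcomp Require Import ring.
Import Order.TTheory GRing.Theory Num.Theory.
Local Open Scope ring_scope.
Local Open Scope sesquilinear_scope.

Section Psd.
Context {C : numClosedFieldType} {n : nat}.
Implicit Types (A B P Q X Y : 'M[C]_n) (u v : 'rV[C]_n).

Lemma adjM p q r (A : 'M[C]_(p,q)) (B : 'M[C]_(q,r)) : (A *m B)^t* = B^t* *m A^t*.
Proof. by rewrite trmx_mul map_mxM. Qed.
Lemma adjD p q (A B : 'M[C]_(p,q)) : (A + B)^t* = A^t* + B^t*.
Proof. by apply/matrixP => i j; rewrite !mxE rmorphD. Qed.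
Lemma adjN p q (A : 'M[C]_(p,q)) : (- A)^t* = - A^t*.
Proof. by apply/matrixP => i j; rewrite !mxE rmorphN. Qed.
Lemma adjB p q (A B : 'M[C]_(p,q)) : (A - B)^t* = A^t* - B^t*.
Proof. by rewrite adjD adjN. Qed.
Lemma adjZ p q c (A : 'M[C]_(p,q)) : (c *: A)^t* = c^* *: A^t*.
Proof. by apply/matrixP => i j; rewrite !mxE rmorphM. Qed.
Lemma adjS c : (c%:M : 'M[C]_n)^t* = (c^*)%:M.
Proof. by rewrite tr_scalar_mx map_scalar_mx. Qed.

Lemma hermP A : A \is hermsymmx <-> A^t* = A.
Proof.
split; first by move/is_hermitianmxP; rewrite expr0 scale1r => <-.
by move=> h; apply/is_hermitianmxP; rewrite expr0 scale1r h.
Qed.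

Lemma adj_delta p q (i : 'I_p) (j : 'I_q) :
  (delta_mx i j : 'M[C]_(p, q))^t* = delta_mx j i.
Proof.
apply/matrixP => a b; rewrite !mxE.
by case: eqP => _ ; case: eqP => _ /=; rewrite ?rmorph1 ?rmorph0.
Qed.

Definition qf A u := (u *m A *m u^t*) 0 0.

Lemma qfD A B u : qf (A + B) u = qf A u + qf B u.
Proof. by rewrite /qf mulmxDr mulmxDl mxE. Qed.
Lemma qfN A u : qf (- A) u = - qf A u.
Proof. by rewrite /qf mulmxN mulNmx mxE. Qed.
Lemma qfB A B u : qf (A - B) u = qf A u - qf B u.
Proof. by rewrite qfD qfN. Qed.
Lemma qfZ c A u : qf (c *: A) u = c * qf A u.
Proof. by rewrite /qf -scalemxAr -scalemxAl mxE. Qed.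

Lemma qf1_ge0 u : 0 <= qf 1%:M u.
Proof.
rewrite /qf mulmx1 mxE; apply: sumr_ge0 => j _.
by rewrite !mxE mul_conjC_ge0.
Qed.

Lemma qfS c u : qf c%:M u = c * qf 1%:M u.
Proof. by rewrite -qfZ scalemx1. Qed.

Lemma psd_add A B : psdmx A -> psdmx B -> psdmx (A + B).
Proof.
move=> [hA pA] [hB pB]; split; first by apply/hermP; rewrite adjD !(hermP _).1.
move=> u; change (0 <= qf (A + B) u); rewrite qfD addr_ge0 //; [exact: pA|exact: pB].
Qed.

Lemma psd_scale c A : 0 <= c -> psdmx A -> psdmx (c *: A).
Proof.
move=> c0 [hA pA]; split; first by apply/hermP; rewrite adjZ geC0_conj // (hermP _).1.
move=> u; change (0 <= qf (c *: A) u); rewrite qfZ mulr_ge0 //; exact: pA.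
Qed.

Lemma psd0 : psdmx (0 : 'M[C]_n).
Proof.
split; first by apply/hermP; apply/matrixP=> i j; rewrite !mxE rmorph0.
by move=> u; rewrite /qf mulmx0 mul0mx mxE.
Qed.

Lemma psd1 : psdmx (1%:M : 'M[C]_n).
Proof. by split; [apply: hermitian1mx_subproof | apply: qf1_ge0]. Qed.

Lemma psd_congr X Y : psdmx Y -> psdmx (X *m Y *m X^t*).
Proof.
move=> [hY pY]; split.
  by apply/hermP; rewrite !adjM trmxCK (hermP _).1 // mulmxA.
move=> u; change (0 <= qf (X *m Y *m X^t*) u).
by rewrite /qf !mulmxA -mulmxA -adjM; apply: pY.
Qed.

Lemma psd_diag (e : 'rV[C]_n) : (forall j, 0 <= e 0 j) -> psdmx (diag_mx e).
Proof.
move=> e0; split.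
  apply/hermP; apply/matrixP => i j; rewrite !mxE.
  rewrite eq_sym; case: eqP => [->|_]; rewrite ?mulr1n ?mulr0n ?rmorph0 //.
  exact: geC0_conj.
move=> u; change (0 <= qf (diag_mx e) u); rewrite /qf mul_mx_diag mxE.
apply: sumr_ge0 => j _; rewrite !mxE mulrAC mulr_ge0 //.
exact: mul_conjC_ge0.
Qed.

Lemma psd_sum (I : Type) (r : seq I) (P : pred I) (F : I -> 'M[C]_n) :
  (forall i, P i -> psdmx (F i)) -> psdmx (\sum_(i <- r | P i) F i).
Proof.
move=> h; elim/big_rec: _ => [|i x Pi px]; first exact: psd0.
exact: psd_add _ _ (h i Pi) px.
Qed.

Lemma psd_herm A : psdmx A -> A^t* = A.
Proof. by case=> /hermP. Qed.

Lemma le_refl A : A \is hermsymmx -> loewner_le A A.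
Proof. by move=> _; rewrite /loewner_le subrr; apply: psd0. Qed.

Lemma le_trans A B D : loewner_le A B -> loewner_le B D -> loewner_le A D.
Proof.
rewrite /loewner_le => h1 h2; have := psd_add _ _ h2 h1.
by rewrite addrA subrK.
Qed.

Lemma le_add A B A' B' : loewner_le A B -> loewner_le A' B' ->
  loewner_le (A + A') (B + B').
Proof.
rewrite /loewner_le => h1 h2; have := psd_add _ _ h1 h2.
by rewrite opprD addrACA.
Qed.

Lemma le_scale c A B : 0 <= c -> loewner_le A B -> loewner_le (c *: A) (c *: B).
Proof. by rewrite /loewner_le -scalerBr; apply: psd_scale. Qed.

Lemma le_psd A : loewner_le 0 A <-> psdmx A.
Proof. by rewrite /loewner_le subr0. Qed.

Section Spec.
Variable H : 'M[C]_n.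
Hypothesis hH : H \is hermsymmx.
Let U := spectralmx H.
Let d := spectral_diag H.

Lemma specE : H = U^t* *m diag_mx d *m U.
Proof.
have /orthomx_spectralP E := hermitian_normalmx hH.
by rewrite {1}E invmx_unitary // spectral_unitarymx.
Qed.

Lemma UUt : U *m U^t* = 1%:M.
Proof. by apply/unitarymxP; apply: spectral_unitarymx. Qed.

Lemma d_real j : (d 0 j)^* = d 0 j.
Proof.
have /mxOverP h := hermitian_spectral_diag_real hH.
exact: conj_Creal (h 0 j).
Qed.

Lemma rowU_Ut j : row j U *m U^t* = delta_mx 0 j.
Proof. by rewrite -row_mul UUt rowE mulmx1. Qed.

Lemma eigL j : row j U *m H = d 0 j *: row j U.
Proof.
rewrite {1}specE !mulmxA rowU_Ut mul_mx_diag.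
rewrite [in RHS]rowE scalemxAl; congr (_ *m _).
apply/matrixP => i k; rewrite !mxE.
rewrite [i]ord1 eqxx /=; case: eqP => [->|_] /=; rewrite ?mulr0 ?mul0r ?mulr1 ?mul1r. all: by [].
Qed.

Lemma eigR j : H *m (row j U)^t* = d 0 j *: (row j U)^t*.
Proof.
by rewrite -[in LHS](hermP H).1 // -adjM eigL adjZ d_real.
Qed.

Lemma qf1_row j : qf 1%:M (row j U) = 1.
Proof.
rewrite /qf mulmx1 [X in _ *m X^t*]rowE adjM mulmxA rowU_Ut.
rewrite adj_delta.
by rewrite mul_delta_mx mxE !eqxx.
Qed.

Lemma qf_row A j : qf A (row j U) = ((row j U) *m A *m (row j U)^t*) 0 0.
Proof. by []. Qed.

Lemma eig_qf j : qf H (row j U) = d 0 j.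
Proof.
have := qf1_row j; rewrite /qf mulmx1 => h1.
by rewrite eigL -scalemxAl mxE h1 mulr1.
Qed.

Lemma psd_eig_ge0 j : psdmx H -> 0 <= d 0 j.
Proof. by case=> _ p; rewrite -eig_qf; apply: p. Qed.

Lemma psd_of_eig : (forall j, 0 <= d 0 j) -> psdmx H.
Proof.
move=> h; rewrite specE; have := psd_congr (U^t*) _ (psd_diag _ h).
by rewrite trmxCK.
Qed.
End Spec.

Lemma root_le P Q : psdmx P -> psdmx Q -> loewner_le (P *m P) (Q *m Q) ->
  loewner_le P Q.
Proof.
move=> pP pQ h.
have hH : (Q - P) \is hermsymmx.
  by apply/hermP; rewrite adjB (psd_herm _ pQ) (psd_herm _ pP).
rewrite /loewner_le; apply: (psd_of_eig _ hH) => j.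
set v := row j (spectralmx (Q - P)); set d := spectral_diag (Q - P) 0 j.
have t1 : (v *m ((Q - P) *m Q) *m v^t*) 0 0 = d * qf Q v.
  by rewrite mulmxA eigL // -!scalemxAl mxE.
have t2 : (v *m (P *m (Q - P)) *m v^t*) 0 0 = d * qf P v.
  rewrite -mulmxA -mulmxA eigR // -!scalemxAr mxE.
  by rewrite /qf !mulmxA.
have key : qf (Q *m Q - P *m P) v = d * (qf Q v + qf P v).
  have -> : Q *m Q - P *m P = (Q - P) *m Q + P *m (Q - P).
    by rewrite mulmxBl mulmxBr addrA subrK.
  by rewrite qfD /qf t1 t2 mulrDr.
have hq : 0 <= d * (qf Q v + qf P v) by rewrite -key; case: h => _; apply.
have qQ : 0 <= qf Q v by case: pQ => _; apply.
have qP : 0 <= qf P v by case: pP => _; apply.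
have s0 : 0 <= qf Q v + qf P v by rewrite addr_ge0.
move: s0; rewrite le0r => /orP [|s_pos]; last by rewrite -(pmulr_lge0 _ s_pos).
rewrite paddr_eq0 // => /andP [/eqP q1 /eqP q2].
by rewrite /d -eig_qf // qfB q1 q2 subrr.
Qed.

Lemma sqrtmx_spec (S : 'M[C]_n) : psdmx S ->
  psdmx (sqrtmx S) /\ sqrtmx S *m sqrtmx S = S.
Proof.
move=> pS; have hS : S \is hermsymmx by case: pS.
set U := spectralmx S; set d := spectral_diag S.
have d0 j : 0 <= d 0 j by apply: psd_eig_ge0.
have E : sqrtmx S = U^t* *m diag_mx (map_mx sqrtC d) *m U.
  by rewrite /sqrtmx invmx_unitary // spectral_unitarymx.
rewrite E; split.
  have := psd_congr (U^t*) _ (psd_diag (map_mx sqrtC d) _); rewrite trmxCK; apply.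
  by move=> j; rewrite mxE sqrtC_ge0.
rewrite [in RHS](specE S hS) -/U -/d.
rewrite !mulmxA -[_ *m U *m U^t*]mulmxA (UUt S) mulmx1 -[_ *m diag_mx _ *m diag_mx _]mulmxA.
rewrite mulmx_diag; congr (_ *m diag_mx _ *m _).
by apply/matrixP => i j; rewrite !mxE [i]ord1 -expr2 sqrtCK.
Qed.

Lemma psd_sqr (T : 'M[C]_n) : T \is hermsymmx -> psdmx (T *m T).
Proof.
move=> /hermP hT; have := psd_congr T _ psd1.
by rewrite mulmx1 hT.
Qed.

Lemma herm_add A B : A \is hermsymmx -> B \is hermsymmx -> A + B \is hermsymmx.
Proof. by move=> /hermP hA /hermP hB; apply/hermP; rewrite adjD hA hB. Qed.

Lemma herm_scale c A : c \is Num.real -> A \is hermsymmx -> c *: A \is hermsymmx.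
Proof. by move=> cr /hermP hA; apply/hermP; rewrite adjZ conj_Creal // hA. Qed.

Lemma herm_sum k (F : 'I_k -> 'M[C]_n) (w : 'I_k -> C) :
  (forall i, w i \is Num.real) -> (forall i, F i \is hermsymmx) ->
  \sum_(i < k) w i *: F i \is hermsymmx.
Proof.
move=> wr hF; elim/big_rec: _ => [|i x _ hx].
  by case: psd0.
by apply: herm_add => //; apply: herm_scale.
Qed.

Lemma zmod4 (V : zmodType) (a b c d : V) : a - b - (c - d) = a - c - b + d.
Proof. by rewrite opprB addrA [_ + d + _]addrAC [a - b - c]addrAC. Qed.

Lemma jensen k (F : 'I_k -> 'M[C]_n) (w : 'I_k -> C) :
  (forall i, F i \is hermsymmx) -> (forall i, 0 <= w i) -> \sum_(i < k) w i = 1 ->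
  loewner_le ((\sum_(i < k) w i *: F i) *m (\sum_(i < k) w i *: F i))
             (\sum_(i < k) w i *: (F i *m F i)).
Proof.
move=> hF w0 w1; set S := \sum_(i < k) w i *: F i.
have hS : S \is hermsymmx.
  by apply: herm_sum => // i; apply/ger0_real/w0.
have P : psdmx (\sum_(i < k) w i *: ((F i - S) *m (F i - S))).
  apply: psd_sum => i _; apply: psd_scale => //; apply: psd_sqr.
  by apply: herm_add => //; rewrite -scaleN1r; apply: herm_scale => //; rewrite realN real1.
rewrite /loewner_le; suff -> : \sum_(i < k) w i *: (F i *m F i) - S *m S =
          \sum_(i < k) w i *: ((F i - S) *m (F i - S)) by [].
have ex i : w i *: ((F i - S) *m (F i - S)) =
   w i *: (F i *m F i) - S *m (w i *: F i) - (w i *: F i) *m S + w i *: (S *m S).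
  rewrite mulmxBl !mulmxBr zmod4 !scalerDr !scalerN.
  by rewrite (scalemxAr (w i) S) (scalemxAl (w i) (F i) S).
rewrite (eq_bigr _ (fun i _ => ex i)) big_split /= !sumrB.
rewrite -mulmx_sumr -mulmx_suml -scaler_suml w1 scale1r -/S.
by rewrite subrK.
Qed.
End Psd.

Section PolyPart.
Variable C : numClosedFieldType.
Variable n' : nat.
Local Notation n := n'.+1.
Variable A : 'M[C]_n.
Local Notation h := (horner_mx A).

Lemma hZ c p : h (c%:P * p) = c *: h p.
Proof. by rewrite rmorphM /= horner_mx_C -mulmxE mul_scalar_mx. Qed.


Lemma psd_prod pX pY c : psdmx (h pX) -> psdmx (h pY) -> pX + pY = c%:P ->
  0 < c -> psdmx (h (pX * pY)).
Proof.
move=> hX hY E c0.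
have pYE : pY = c%:P - pX by rewrite -E addrC addKr.
have E2 : c%:P * (pX * pY) = pX * pY * pX + pY * pX * pY by rewrite pYE; ring.
have E3 : h (pX * pY) = c^-1 *: h (pX * pY * pX + pY * pX * pY).
  by rewrite -E2 hZ scalerA mulVf ?gt_eqF // scale1r.
rewrite E3 rmorphD !rmorphM /= -!mulmxE.
apply: psd_scale; first by rewrite invr_ge0 ltW.
apply: psd_add.
  by have := psd_congr (h pX) _ hY; rewrite (psd_herm _ hX).
by have := psd_congr (h pY) _ hX; rewrite (psd_herm _ hY).
Qed.

Lemma kant1 m M : m < M -> loewner_le (m%:M) A -> loewner_le A (M%:M) ->
  loewner_le (A *m A) ((M + m) *: A - (M * m)%:M).
Proof.
move=> mM h1 h2.
have hX : psdmx (h ('X - m%:P)) by rewrite rmorphB /= horner_mx_X horner_mx_C.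
have hY : psdmx (h (M%:P - 'X)) by rewrite rmorphB /= horner_mx_X horner_mx_C.
have := psd_prod _ _ _ hX hY _ (_ : 0 < M - m).
have -> : ('X - m%:P) * (M%:P - 'X) = (M + m)%:P * 'X - (M * m)%:P - 'X * 'X.
  by rewrite polyCD polyCM; ring.
rewrite !rmorphB /= hZ !rmorphM /= !horner_mx_X !horner_mx_C -!mulmxE -scalar_mxM => H.
rewrite /loewner_le; apply: H; last by rewrite subr_gt0.
by ring.
Qed.

Lemma sq_expand x y : (x *: A + y%:M) *m (x *: A + y%:M) =
  (x * x) *: (A *m A) + (x * y + x * y) *: A + (y * y)%:M.
Proof.
have E1 : x *: A + y%:M = h (x%:P * 'X + y%:P).
  by rewrite rmorphD /= hZ horner_mx_X horner_mx_C.
have E2 : (x%:P * 'X + y%:P) * (x%:P * 'X + y%:P) =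
   (x * x)%:P * ('X * 'X) + (x * y + x * y)%:P * 'X + (y * y)%:P.
  by rewrite !polyCD !polyCM; ring.
rewrite E1 mulmxE -rmorphM /= E2.
by rewrite !rmorphD /= !hZ rmorphM /= horner_mx_X horner_mx_C -mulmxE -polyCD hZ horner_mx_X.
Qed.

Lemma psd_quad x y a b c : A \is hermsymmx -> x \is Num.real -> y \is Num.real ->
  a = x * x -> b = x * y + x * y -> c = y * y ->
  psdmx (a *: (A *m A) + b *: A + c%:M).
Proof.
move=> hA xr yr -> -> ->.
set T := x *: A + y%:M.
have hT : T \is hermsymmx.
  by apply/hermP; rewrite adjD adjZ adjS !conj_Creal // (hermP _).1.
have E1 : T = h (x%:P * 'X + y%:P).
  by rewrite rmorphD /= hZ horner_mx_X horner_mx_C.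
have E2 : (x%:P * 'X + y%:P) * (x%:P * 'X + y%:P) =
   (x * x)%:P * ('X * 'X) + (x * y + x * y)%:P * 'X + (y * y)%:P.
  by rewrite !polyCD !polyCM; ring.
have := psd_sqr _ hT; rewrite E1 mulmxE -rmorphM /= E2.
rewrite !rmorphD /= !hZ rmorphM /= horner_mx_X horner_mx_C -mulmxE -polyCD hZ horner_mx_X. by [].
Qed.

Lemma zmod5 (V : zmodType) (a b c p r : V) :
  a + b + c - (p - r) = a + (b - p) + (c + r).
Proof.
rewrite opprB -!addrA; congr (_ + (_ + _)).
by rewrite [RHS]addrCA [- p + r]addrC.
Qed.

Lemma le_quad a b p r x y : A \is hermsymmx -> x \is Num.real -> y \is Num.real ->
  a * a = x * x -> a * b + a * b - p = x * y + x * y -> b * b + r = y * y ->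
  loewner_le (p *: A - r%:M) ((a *: A + b%:M) *m (a *: A + b%:M)).
Proof.
move=> hA xr yr e1 e2 e3; rewrite /loewner_le sq_expand.
rewrite zmod5 -scalerBl -raddfD /= e1.
exact: (psd_quad x y).
Qed.

End PolyPart.

Section Main.
Context {C : numClosedFieldType} {n' : nat}.
Local Notation n := n'.+1.

Lemma le_sum k (F G : 'I_k -> 'M[C]_n) :
  (forall i, loewner_le (F i) (G i)) ->
  loewner_le (\sum_(i < k) F i) (\sum_(i < k) G i).
Proof.
move=> h; rewrite /loewner_le -sumrB; apply: psd_sum => i _; exact: h.
Qed.

Lemma fam k (A : 'I_k -> 'M[C]_n) (w : 'I_k -> C) (m M : C) :
  0 < m -> m < M -> (forall i, A i \is hermsymmx) ->
  (forall i, loewner_le (m%:M) (A i) /\ loewner_le (A i) (M%:M)) ->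
  (forall i, 0 < w i) -> \sum_(i < k) w i = 1 ->
  let S := \sum_(i < k) w i *: A i in
  let X := \sum_(i < k) w i *: (A i *m A i) in
  [/\ psdmx S,
      loewner_le (sqrtmx X) (((M + m) / (2 * sqrtC (M * m))) *: S) &
      loewner_le (sqrtmx X) (S + ((M - m) ^+ 2 / (4 * (M + m)))%:M)].
Proof.
move=> m0 mM hA bA w0 w1 S X.
have w0' i : 0 <= w i by apply: ltW.
have wr i : w i \is Num.real by apply: ger0_real.
have hS : S \is hermsymmx by apply: herm_sum.
have Sm : loewner_le (m%:M) S.
  rewrite /loewner_le.
  have -> : S - m%:M = \sum_(i < k) w i *: (A i - m%:M).
    rewrite (eq_bigr (fun i => w i *: A i - w i *: m%:M)); last by move=> i _; rewrite scalerBr.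
    by rewrite sumrB -scaler_suml w1 scale1r.
  by apply: psd_sum => i _; apply: psd_scale => //; case: (bA i).
have pS : psdmx S.
  have := psd_add _ _ Sm (psd_scale _ _ (ltW m0) psd1).
  by rewrite scalemx1 subrK.
have K1 : loewner_le X ((M + m) *: S - (M * m)%:M).
  have -> : (M + m) *: S - (M * m)%:M =
            \sum_(i < k) w i *: ((M + m) *: A i - (M * m)%:M).
    rewrite (eq_bigr (fun i => (M + m) *: (w i *: A i) - w i *: (M * m)%:M)); last first.
      by move=> i _; rewrite scalerBr !scalerA mulrC.
    by rewrite sumrB -scaler_sumr -scaler_suml w1 scale1r.
  apply: le_sum => i; apply: le_scale => //.
  by case: (bA i) => h1 h2; apply: kant1.
have pX : psdmx X.
  by apply: psd_sum => i _; apply: psd_scale => //; apply: psd_sqr.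
have [pR R2] := sqrtmx_spec _ pX.
have mr : m \is Num.real by apply: gtr0_real.
have M0 : 0 < M by apply: lt_trans mM.
have Mr : M \is Num.real by apply: gtr0_real.
have Mm0 : 0 < M + m by rewrite addr_gt0.
split => //.
- set s := sqrtC (M * m).
  have s0 : 0 < s by rewrite sqrtC_gt0 mulr_gt0.
  have s2 : s * s = M * m by rewrite -expr2 sqrtCK.
  set K := (M + m) / (2 * s).
  have K0 : 0 <= K by rewrite divr_ge0 // ?mulr_ge0 ?ltW.
  apply: root_le => //; first by apply: psd_scale.
  rewrite R2; apply: (le_trans _ _ _ K1).
  have := @le_quad C n' S K 0 (M + m) (M * m) K (- s) hS.
  rewrite (_ : (0 : C)%:M = 0); last by apply/matrixP => i j; rewrite !mxE mul0rn.
  rewrite addr0; apply => //.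
  + exact: ger0_real.
  + by rewrite realN; apply: gtr0_real.
  + rewrite mulr0 addr0 sub0r mulrN -opprD; congr (- _).
    rewrite /K; field; rewrite ?mulf_neq0 ?gt_eqF //; exact: pnatr_eq0.
  + by rewrite mulr0 add0r mulrNN s2.
- set d := (M - m) ^+ 2 / (4 * (M + m)).
  have d0 : 0 <= d by rewrite divr_ge0 ?exprn_ge0 ?mulr_ge0 ?ltW ?subr_gt0.
  apply: root_le => //.
    by apply: psd_add => //; rewrite -scalemx1; apply: psd_scale => //; apply: psd1.
  rewrite R2; apply: (le_trans _ _ _ K1).
  have := @le_quad C n' S 1 d (M + m) (M * m) 1 (- ((M + m) / 2 - d)) hS.
  rewrite scale1r; apply => //.
  + rewrite realN realB //; last exact: ger0_real.
    by apply: ger0_real; rewrite divr_ge0 ?ler0n // ltW.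
  + by rewrite !mul1r; field.
  + by rewrite /d; field; rewrite gt_eqF.

Qed.

End Main.

Lemma le_reflx {C : numClosedFieldType} {n : nat} (X : 'M[C]_n) : loewner_le X X.
Proof. by rewrite /loewner_le subrr; apply: psd0. Qed.

Theorem mainTheorem9 (C : numClosedFieldType) (n k : nat)
    (A B : 'I_k -> 'M[C]_n) (w : 'I_k -> C) (m M : C) :
  0 < m -> m < M ->
  (forall i, A i \is hermsymmx) -> (forall i, B i \is hermsymmx) ->
  (forall i, loewner_le (m%:M) (A i) /\ loewner_le (A i) (M%:M)) ->
  (forall i, loewner_le (m%:M) (B i) /\ loewner_le (B i) (M%:M)) ->
  (forall i, 0 < w i) -> \sum_(i < k) w i = 1 ->
  let SA := sqrtmx (\sum_(i < k) w i *: (A i *m A i)) in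
  let SB := sqrtmx (\sum_(i < k) w i *: (B i *m B i)) in
  let SAB := sqrtmx (\sum_(i < k) w i *: ((A i + B i) *m (A i + B i))) in
  loewner_le (SA + SB) (((M + m) / (2 * sqrtC (M * m))) *: SAB) /\
  loewner_le (SA + SB) (((M - m) ^+ 2 / (2 * (M + m)))%:M + SAB).
Proof.
case: n A B => [|n'] A B.
  move=> *; have z (Z : 'M[C]_0) : Z = 0 by apply/matrixP => [[]].
  by split; rewrite /loewner_le [X in psdmx X]z; apply: psd0.
move=> m0 mM hA hB bA bB w0 w1 SA SB SAB.
have [pA l1A l2A] := fam _ _ _ _ _ m0 mM hA bA w0 w1.
have [pB l1B l2B] := fam _ _ _ _ _ m0 mM hB bB w0 w1.
set SA' := \sum_(i < k) w i *: A i in pA l1A l2A.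
set SB' := \sum_(i < k) w i *: B i in pB l1B l2B.
have w0' i : 0 <= w i by apply: ltW.
have hF i : A i + B i \is hermsymmx by apply: herm_add.
have eS : \sum_(i < k) w i *: (A i + B i) = SA' + SB'.
  by rewrite -big_split; apply: eq_bigr => i _; rewrite scalerDr.
have J := jensen _ _ _ hF w0' w1; rewrite eS in J.
set Z := \sum_(i < k) w i *: ((A i + B i) *m (A i + B i)) in J.
have pZ : psdmx Z.
  by apply: psd_sum => i _; apply: psd_scale => //; apply: psd_sqr.
have [pR R2] := sqrtmx_spec _ pZ.
have pP : psdmx (SA' + SB') by apply: psd_add.
have root : loewner_le (SA' + SB') SAB.
  by apply: root_le => //; rewrite /SAB R2.
have M0 : 0 < M by apply: lt_trans mM.
have Mm0 : 0 < M + m by rewrite addr_gt0.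
split.
  apply: le_trans _ _ _ (le_add _ _ _ _ l1A l1B) _.
  rewrite -scalerDr; apply: le_scale => //.
  by rewrite divr_ge0 ?mulr_ge0 ?sqrtC_ge0 ?ltW // mulr_gt0.
apply: le_trans _ _ _ (le_add _ _ _ _ l2A l2B) _.
set d := (M - m) ^+ 2 / (4 * (M + m)).
have -> : SA' + d%:M + (SB' + d%:M) = (SA' + SB') + (d + d)%:M.
  by rewrite raddfD /= addrACA.
have -> : (M - m) ^+ 2 / (2 * (M + m)) = d + d.
  by rewrite /d; field; rewrite gt_eqF.
by rewrite addrC; apply: le_add => //; apply: le_reflx.
Qed.
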